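(* For $s\in\{1/2,1,3/2,\dots\}$, integers $0\le\sigma\le 2s$ and $-\sigma\le\mu\le\sigma$, let $p^{(s)}_{\sigma\mu}$ be the Majorana polynomial of the tensor operator $T^{(s)}_{\sigma\mu}$. Then: (1) $L\big(p^{(s)}_{\sigma\mu}\big)=\frac{\sqrt{(2s+\sigma+1)(2s-\sigma)}}{2s}\,p^{(s-1/2)}_{\sigma\mu}$ if $s>\sigma/2$, and $L\big(p^{(s)}_{\sigma\mu}\big)=0$ otherwise. In particular $(2s+1)^{-1/2}L\big(p^{(s)}_{00}\big)=(2s)^{-1/2}p^{(s-1/2)}_{00}$, and consequently $L$ preserves traces: for every operator $C$ on $\mathcal{H}_s$ ($s\ge 1$), the operator $C'$ on $\mathcal{H}_{s-1/2}$ with $p_{C'}=L(p_C)$ satisfies $\mathrm{Tr}\,C'=\mathrm{Tr}\,C$. (2) For every $\sigma\le 2s$, \[ p^{(s)}_{\sigma\mu}(z)=l(s,\sigma)^{-1}\,(z^az_a)^{2s-\sigma}\,p^{(\sigma/2)}_{\sigma\mu}(z),\qquad l(s,\sigma)=\sqrt{\frac{(2s+\sigma+1)!\,(2s-\sigma)!}{(2\sigma+1)!}}\;\frac{\sigma!}{(2s)!}. \]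
   Context: $\mathcal{H}_s$ is the spin-$s$ Hilbert space with orthonormal $S_z$-eigenbasis $\{|s,m\rangle\}$. The tensor operators are $T^{(s)}_{\sigma\mu}=\sum_{m,m'=-s}^{s}(-1)^{s-m'}C^{\sigma\mu}_{sm,\,s,-m'}|s,m\rangle\langle s,m'|$, where $C^{jm}_{j_1m_1,j_2m_2}$ are the standard Clebsch–Gordan coefficients. Treat $z_1,z_2,z^1,z^2$ as independent variables, $\partial_a=\partial/\partial z_a$, $\partial^a=\partial/\partial z^a$, and repeated indices $a\in\{1,2\}$ are summed (so $z^az_a=z^1z_1+z^2z_2$). With $\langle -\mathbf n_B|=\sum_m(-1)^{s-m}\sqrt{\binom{2s}{s-m}}z_1^{s+m}z_2^{s-m}\langle s,m|$ and $|-\mathbf n_B\rangle=\sum_m(-1)^{s-m}\sqrt{\binom{2s}{s-m}}(z^1)^{s+m}(z^2)^{s-m}|s,m\rangle$, the Majorana polynomial of an operator $C$ on $\mathcal{H}_s$ is $p_C=\langle-\mathbf n_B|C|-\mathbf n_B\rangle$; this is a bijection from operators on $\mathcal{H}_s$ to the space $P^{(N,N)}$ ($N=2s$) of polynomials all of whose monomials $z_1^\alpha z_2^\beta(z^1)^\gamma(z^2)^\delta$ have $\alpha+\beta=\gamma+\delta=N$. The partial trace operator $L:P^{(N,N)}\to P^{(N-1,N-1)}$ is $L(p)=N^{-2}\,\partial_a\partial^a p$. *)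

(* Defs.v *)
From mathcomp Require Import all_boot all_order all_algebra.
From mathcomp Require Import mpoly.
Set Implicit Arguments. Unset Strict Implicit. Unset Printing Implicit Defensive.
Import Order.TTheory GRing.Theory Num.Theory.
Local Open Scope ring_scope.

(* Spin values, magnetic
   quantum numbers etc. are represented DOUBLED: N = 2s, index k = s + m in
   'I_(N+1), doubled spins as integers. *)

Section Defs.
Variable C : numClosedFieldType.

Definition half (x : int) : int := (x %/ 2)%Z.
Definition ifact (x : int) : C := ((`|x|%N)`!)%:R.

(* Standard (Condon-Shortley) Clebsch-Gordan coefficient C^{J M}_{j1 m1, j2 m2}
   via Racah's formula; all six arguments are given DOUBLED
   (tj1 = 2 j1, etc.). *)
Definition CG (tj1 tm1 tj2 tm2 tJ tM : int) : C :=
  if [&& tM == tm1 + tm2, (0 <= tj1), (0 <= tj2), (0 <= tJ),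
         `|tm1| <= tj1, `|tm2| <= tj2, `|tM| <= tJ,
         (2 %| tj1 + tm1)%Z, (2 %| tj2 + tm2)%Z, (2 %| tJ + tM)%Z,
         (2 %| tj1 + tj2 + tJ)%Z, `|tj1 - tj2| <= tJ & tJ <= tj1 + tj2]
  then
    sqrtC ((tJ + 1)%:~R * ifact (half (tJ + tj1 - tj2))
             * ifact (half (tJ - tj1 + tj2)) * ifact (half (tj1 + tj2 - tJ))
             / ifact (half (tj1 + tj2 + tJ) + 1))
    * sqrtC (ifact (half (tJ + tM)) * ifact (half (tJ - tM))
             * ifact (half (tj1 - tm1)) * ifact (half (tj1 + tm1))
             * ifact (half (tj2 - tm2)) * ifact (half (tj2 + tm2)))
    * \sum_(k < `|half (tj1 + tj2 - tJ)|%N.+1)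
        (if [&& 0 <= half (tj1 + tj2 - tJ) - k%:Z,
                0 <= half (tj1 - tm1) - k%:Z,
                0 <= half (tj2 + tm2) - k%:Z,
                0 <= half (tJ - tj2 + tm1) + k%:Z &
                0 <= half (tJ - tj1 - tm2) + k%:Z]
         then (-1) ^+ k /
              (ifact k%:Z * ifact (half (tj1 + tj2 - tJ) - k%:Z)
               * ifact (half (tj1 - tm1) - k%:Z) * ifact (half (tj2 + tm2) - k%:Z)
               * ifact (half (tJ - tj2 + tm1) + k%:Z)
               * ifact (half (tJ - tj1 - tm2) + k%:Z))
         else 0)
  else 0.

(* Operators on H_s (N = 2s) are matrices 'M_(N+1); index k : 'I_(N+1)
   corresponds to the basis vector |s, m> with m = k - s, i.e. 2m = 2k - N.
   Entry (k,k') is <s,m|A|s,m'>. *)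

(* Tensor operator T^{(s)}_{sigma mu}, N = 2s:
   sum_{m,m'} (-1)^{s-m'} C^{sigma mu}_{s m, s, -m'} |s,m><s,m'| *)
Definition tensorOp (N sigma : nat) (mu : int) : 'M[C]_N.+1 :=
  \matrix_(k < N.+1, k' < N.+1)
    ((-1) ^+ (N - k') *
     CG N%:Z (2 * k%:Z - N%:Z) N%:Z (- (2 * k'%:Z - N%:Z)) (2 * sigma%:Z) (2 * mu)).

(* Variables: z_1 = 'X_0, z_2 = 'X_1, z^1 = 'X_2, z^2 = 'X_3. *)
Definition z1 : {mpoly C[4]} := 'X_(inord 0).
Definition z2 : {mpoly C[4]} := 'X_(inord 1).
Definition w1 : {mpoly C[4]} := 'X_(inord 2).
Definition w2 : {mpoly C[4]} := 'X_(inord 3).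

(* Majorana polynomial p_A = < -n_B | A | -n_B >, with
   < -n_B | = sum_m (-1)^{s-m} sqrt(binom(2s, s-m)) z_1^{s+m} z_2^{s-m} <s,m|
   | -n_B > = sum_m (-1)^{s-m} sqrt(binom(2s, s-m)) (z^1)^{s+m} (z^2)^{s-m} |s,m>
   (s + m = k, s - m = N - k). *)
Definition majorana (N : nat) (A : 'M[C]_N.+1) : {mpoly C[4]} :=
  \sum_(k < N.+1) \sum_(k' < N.+1)
    (((-1) ^+ (N - k) * sqrtC ('C(N, N - k))%:R) * A k k'
      * ((-1) ^+ (N - k') * sqrtC ('C(N, N - k'))%:R))
    *: (z1 ^+ k * z2 ^+ (N - k) * w1 ^+ k' * w2 ^+ (N - k')).

Definition pT (N sigma : nat) (mu : int) : {mpoly C[4]} :=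
  majorana (tensorOp N sigma mu).

Definition Lop (N : nat) (p : {mpoly C[4]}) : {mpoly C[4]} :=
  (N%:R ^+ 2)^-1 *: (mderiv (inord 0) (mderiv (inord 2) p)
                     + mderiv (inord 1) (mderiv (inord 3) p)).

Definition zz : {mpoly C[4]} := w1 * z1 + w2 * z2.

Definition lcoef (N sigma : nat) : C :=
  sqrtC (((N + sigma + 1)`! * (N - sigma)`!)%:R / ((2 * sigma + 1)`!)%:R)
  * (sigma`!)%:R / (N`!)%:R.

End Defs.

(* Main.v *)
Require Import Defs.
From mathcomp Require Import all_boot all_order all_algebra.
From mathcomp Require Import mpoly.
From mathcomp Require Import ring zify.
Import Order.TTheory GRing.Theory Num.Theory.
Local Open Scope ring_scope.
Set Implicit Arguments. Unset Strict Implicit. Unset Printing Implicit Defensive.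
Section Sec0.
Variable C : numClosedFieldType.
Local Notation P := {mpoly C[4]}.
Definition i0 : 'I_4 := inord 0.
Definition i1 : 'I_4 := inord 1.
Definition i2 : 'I_4 := inord 2.
Definition i3 : 'I_4 := inord 3.

Lemma inord_eqv (a : nat) (j : 'I_4) : (a < 4)%N -> ((inord a : 'I_4) == j) = (a == nat_of_ord j).
Proof. by move=> ha; rewrite -val_eqE /= inordK. Qed.

Definition mono (a b c d : nat) : 'X_{1..4} :=
  (U_(i0) *+ a + U_(i1) *+ b + U_(i2) *+ c + U_(i3) *+ d)%MM.

Lemma monoE a b c d (j : 'I_4) : mono a b c d j =
  (if nat_of_ord j == 0%N then a else if nat_of_ord j == 1%N then b else if nat_of_ord j == 2%N then c else d).
Proof.
rewrite /mono !mnmDE !mulmnE !mnm1E /i0 /i1 /i2 /i3 !inord_eqv //.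
case: j => [[|[|[|[|j]]]] hj] //=; lia.
Qed.

Lemma mono0 a b c d : mono a b c d i0 = a.
Proof. by rewrite monoE /i0 inordK. Qed.
Lemma mono1 a b c d : mono a b c d i1 = b.
Proof. by rewrite monoE /i1 inordK. Qed.
Lemma mono2 a b c d : mono a b c d i2 = c.
Proof. by rewrite monoE /i2 inordK. Qed.
Lemma mono3 a b c d : mono a b c d i3 = d.
Proof. by rewrite monoE /i3 inordK. Qed.

Lemma mono_eta (m : 'X_{1..4}) : m = mono (m i0) (m i1) (m i2) (m i3).
Proof.
apply/mnmP => j; rewrite monoE.
case: j => [[|[|[|[|j]]]] hj] //=.
all: congr (m _); apply/val_inj; rewrite /= inordK //.
Qed.

Lemma mono_eq a b c d a' b' c' d' :
  (mono a b c d == mono a' b' c' d') = [&& a == a', b == b', c == c' & d == d'].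
Proof.
apply/eqP/and4P => [E|[/eqP-> /eqP-> /eqP-> /eqP->] //].
split; apply/eqP.
- by rewrite -(mono0 a b c d) E mono0.
- by rewrite -(mono1 a b c d) E mono1.
- by rewrite -(mono2 a b c d) E mono2.
- by rewrite -(mono3 a b c d) E mono3.
Qed.

Lemma monoD a b c d a' b' c' d' :
  (mono a b c d + mono a' b' c' d')%MM = mono (a + a') (b + b') (c + c') (d + d').
Proof. by apply/mnmP => j; rewrite mnmDE !monoE; case: ifP => _; [|case: ifP => _; [|case: ifP]]. Qed.

Definition X4 a b c d : P := 'X_[mono a b c d].

Lemma X4E a b c d : z1 C ^+ a * z2 C ^+ b * w1 C ^+ c * w2 C ^+ d = X4 a b c d.
Proof. by rewrite /z1 /z2 /w1 /w2 /X4 !mpolyXn -!mpolyXD. Qed.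

Lemma X4M a b c d a' b' c' d' :
  X4 a b c d * X4 a' b' c' d' = X4 (a + a') (b + b') (c + c') (d + d').
Proof. by rewrite /X4 -mpolyXD monoD. Qed.

Lemma coefX4 a b c d m : (X4 a b c d)@_m =
  [&& a == m i0, b == m i1, c == m i2 & d == m i3]%:R.
Proof. by rewrite /X4 mcoeffX {1}(mono_eta m) mono_eq. Qed.


Lemma sum_delta (N a : nat) (F : nat -> C) :
  \sum_(k < N) (if (k == a :> nat) then F k else 0) = if (a < N)%N then F a else 0.
Proof.
case: ltnP => ha.
  rewrite (bigD1 (Ordinal ha)) //= eqxx big1 ?addr0 // => i /negbTE.
  by rewrite -val_eqE /= => ->.
by apply: big1 => i _; case: eqP => // E; move: (ltn_ord i); rewrite E ltnNge ha.
Qed.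

Lemma sum_delta_c (N a : nat) (x : C) :
  \sum_(k < N) (if (k == a :> nat) then x else 0) = if (a < N)%N then x else 0.
Proof. exact: (sum_delta N a (fun _ => x)). Qed.

Definition poly4 N (f : nat -> nat -> C) : P :=
  \sum_(k < N.+1) \sum_(k' < N.+1) f k k' *: X4 k (N - k) k' (N - k').

Lemma coef_poly4 N f m : (poly4 N f)@_m =
  if (m i0 + m i1 == N)%N && (m i2 + m i3 == N)%N then f (m i0) (m i2) else 0.
Proof.
rewrite /poly4 raddf_sum /=.
under eq_bigr => k _ do rewrite raddf_sum /=.
transitivity (\sum_(k < N.+1) if (k == m i0 :> nat) then
   \sum_(k' < N.+1) (if (k' == m i2 :> nat) then
      (if (N - m i0 == m i1)%N && (N - m i2 == m i3)%N then f (m i0) (m i2) else 0) else 0) else 0).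
  apply: eq_bigr => k _; case: (@eqP _ (nat_of_ord k) (m i0)) => [->|hk].
    apply: eq_bigr => k' _; rewrite mcoeffZ coefX4 eqxx /=.
    case: (@eqP _ (nat_of_ord k') (m i2)) => [->|hk']; last by rewrite andbF mulr0.
    by rewrite ?eqxx /=; case: ifP => _; rewrite ?mulr1 ?mulr0.
  by rewrite big1 // => k' _; rewrite mcoeffZ coefX4; case: (@eqP _ (nat_of_ord k) (m i0)) hk => //; rewrite mulr0.
rewrite !sum_delta_c.
have -> : ((m i0 + m i1)%N == N) && ((m i2 + m i3)%N == N) = [&& (m i0 < N.+1)%N, (m i2 < N.+1)%N & ((N - m i0)%N == m i1) && ((N - m i2)%N == m i3)].
  by apply/idP/idP => H; lia.
by case: (m i0 < N.+1)%N; case: (m i2 < N.+1)%N.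
Qed.

Lemma majorana_poly4 N (A : 'M[C]_N.+1) : majorana A = poly4 N (fun k k' =>
  ((-1) ^+ (N - k) * sqrtC ('C(N, N - k))%:R) * A (inord k) (inord k')
      * ((-1) ^+ (N - k') * sqrtC ('C(N, N - k'))%:R)).
Proof. by apply: eq_bigr => k _; apply: eq_bigr => k' _; rewrite X4E !inord_val. Qed.

End Sec0.

Section Sec1.
Variable C : numClosedFieldType.
Local Notation P := {mpoly C[4]}.

Lemma dX (i j : 'I_4) : mderiv i ('X_j : P) = (j == i)%:R.
Proof.
rewrite mderivX mnm1E; case: eqP => [->|_]; last by rewrite scale0r.
have -> : (U_(i) - U_(i) = 0)%MM by apply/mnmP => k; rewrite mnmBE subnn mnmE.
by rewrite mpolyX0 scale1r.
Qed.

Let z1 := z1 C. Let z2 := z2 C. Let w1 := w1 C. Let w2 := w2 C.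
Definition Dl (p : P) : P := mderiv i0 (mderiv i2 p) + mderiv i1 (mderiv i3 p).
Definition Ez (p : P) : P := z1 * mderiv i0 p + z2 * mderiv i1 p.
Definition Ew (p : P) : P := w1 * mderiv i2 p + w2 * mderiv i3 p.

Lemma dvar (i j : nat) : (i < 4)%N -> (j < 4)%N ->
  mderiv (inord i) ('X_(inord j) : P) = (j == i)%:R.
Proof. by move=> hi hj; rewrite dX inord_eqv // inordK. Qed.

Lemma Dl_zz p : Dl (zz C * p) = zz C * Dl p + 2%:R * p + Ez p + Ew p.
Proof.
rewrite /Dl /Ez /Ew /zz /z1 /z2 /w1 /w2 /Defs.z1 /Defs.z2 /Defs.w1 /Defs.w2 !mderivM !mderivD !mderivM.
rewrite /i0 /i1 /i2 /i3 !dvar //= ?(mul1r, mulr0, mul0r, addr0, add0r).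
rewrite !mderivD !mderivM !dvar //= ?(mul1r, mulr0, mul0r, addr0, add0r).
ring.
Qed.


Ltac dsimp := rewrite /z1 /z2 /w1 /w2 /Defs.z1 /Defs.z2 /Defs.w1 /Defs.w2 /i0 /i1 /i2 /i3;
  do 3 rewrite ?mderivM ?mderivD ?dvar //= ?(mul1r, mulr1, mulr0, mul0r, addr0, add0r).

Lemma Ez_mul p q : Ez (p * q) = Ez p * q + p * Ez q.
Proof. rewrite /Ez !mderivM; ring. Qed.
Lemma Ew_mul p q : Ew (p * q) = Ew p * q + p * Ew q.
Proof. rewrite /Ew !mderivM; ring. Qed.
Lemma Ez_zz : Ez (zz C) = zz C.
Proof. rewrite /Ez /zz; dsimp; ring. Qed.
Lemma Ew_zz : Ew (zz C) = zz C.
Proof. rewrite /Ew /zz; dsimp; ring. Qed.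

Lemma Ez_pow n p : Ez (zz C ^+ n * p) = n%:R * (zz C ^+ n * p) + zz C ^+ n * Ez p.
Proof.
elim: n => [|n IH]; first by rewrite expr0 !mul1r mul0r add0r.
by rewrite exprS -mulrA Ez_mul Ez_zz IH -natr1; ring.
Qed.
Lemma Ew_pow n p : Ew (zz C ^+ n * p) = n%:R * (zz C ^+ n * p) + zz C ^+ n * Ew p.
Proof.
elim: n => [|n IH]; first by rewrite expr0 !mul1r mul0r add0r.
by rewrite exprS -mulrA Ew_mul Ew_zz IH -natr1; ring.
Qed.

Lemma Dl_pow (s n : nat) q : Dl q = 0 -> Ez q = s%:R * q -> Ew q = s%:R * q ->
  Dl (zz C ^+ n.+1 * q) = ((n.+1 * (n.+2 + 2 * s))%:R) * (zz C ^+ n * q).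
Proof.
move=> h0 hz hw; elim: n => [|n IH].
  rewrite expr1 Dl_zz h0 hz hw expr0 mul1r ?natrM ?natrD ?mul1r ?addr0 ?mulr0 ?add0r. ring.
rewrite exprS -mulrA Dl_zz IH Ez_pow Ew_pow hz hw.
rewrite ?natrM ?natrD -?natr1 ?natrM ?natrD !exprS; ring.
Qed.

End Sec1.

Section Sec2.
Variable C : numClosedFieldType.
Local Notation P := {mpoly C[4]}.
Local Notation Ez := (@Ez C).
Local Notation Ew := (@Ew C).
Local Notation Dl := (@Dl C).

Lemma XdX (i : 'I_4) m : ('X_i : P) * mderiv i 'X_[m] = (m i)%:R * 'X_[m].
Proof.
rewrite mderivX -scalerAr.
have [->|nz] := eqVneq (m i) 0%N; first by rewrite !scale0r mul0r.
rewrite -mpolyXD addmC submK ?lep1mP // scaler_nat mulr_natl //.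
Qed.

Lemma Ez_X4 a b c d : Ez (X4 C a b c d) = (a + b)%:R * X4 C a b c d.
Proof. by rewrite /Ez /X4 /z1 /z2 !XdX mono0 mono1 natrD mulrDl. Qed.
Lemma Ew_X4 a b c d : Ew (X4 C a b c d) = (c + d)%:R * X4 C a b c d.
Proof. by rewrite /Ew /X4 /w1 /w2 !XdX mono2 mono3 natrD mulrDl. Qed.

Lemma Ez_add p q : Ez (p + q) = Ez p + Ez q.
Proof. rewrite /Ez !mderivD; ring. Qed.
Lemma Ez0 : Ez (0 : P) = 0.
Proof. by rewrite /Ez !mderiv0 !mulr0 addr0. Qed.
Lemma Ez_scale c p : Ez (c *: p) = c *: Ez p.
Proof. by rewrite /Ez !mderivZ scalerDr !scalerAr. Qed.
Lemma Ew_add p q : Ew (p + q) = Ew p + Ew q.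
Proof. rewrite /Ew !mderivD; ring. Qed.
Lemma Ew0 : Ew (0 : P) = 0.
Proof. by rewrite /Ew !mderiv0 !mulr0 addr0. Qed.
Lemma Ew_scale c p : Ew (c *: p) = c *: Ew p.
Proof. by rewrite /Ew !mderivZ scalerDr !scalerAr. Qed.

Lemma Ez_poly4 s f : Ez (poly4 s f) = s%:R * poly4 s f.
Proof.
rewrite /poly4 (big_morph _ Ez_add Ez0) mulr_sumr; apply: eq_bigr => k _.
rewrite (big_morph _ Ez_add Ez0) mulr_sumr; apply: eq_bigr => k' _.
rewrite Ez_scale Ez_X4 subnKC; [by rewrite -scalerAr | exact: (ltn_ord k)].
Qed.
Lemma Ew_poly4 s f : Ew (poly4 s f) = s%:R * poly4 s f.
Proof.
rewrite /poly4 (big_morph _ Ew_add Ew0) mulr_sumr; apply: eq_bigr => k _.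
rewrite (big_morph _ Ew_add Ew0) mulr_sumr; apply: eq_bigr => k' _.
rewrite Ew_scale Ew_X4 subnKC; [by rewrite -scalerAr | exact: (ltn_ord k')].
Qed.

Lemma U0E : (U_(i0))%MM = mono 1 0 0 0.
Proof. apply/mnmP => j; rewrite monoE mnm1E /i0 inord_eqv //; by case: j => [[|[|[|[|j]]]] hj]. Qed.
Lemma U1E : (U_(i1))%MM = mono 0 1 0 0.
Proof. apply/mnmP => j; rewrite monoE mnm1E /i1 inord_eqv //; by case: j => [[|[|[|[|j]]]] hj]. Qed.
Lemma U2E : (U_(i2))%MM = mono 0 0 1 0.
Proof. apply/mnmP => j; rewrite monoE mnm1E /i2 inord_eqv //; by case: j => [[|[|[|[|j]]]] hj]. Qed.
Lemma U3E : (U_(i3))%MM = mono 0 0 0 1.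
Proof. apply/mnmP => j; rewrite monoE mnm1E /i3 inord_eqv //; by case: j => [[|[|[|[|j]]]] hj]. Qed.

Lemma coef_Dl p a b c d : (Dl p)@_(mono a b c d) =
  p@_(mono a.+1 b c.+1 d) *+ (a.+1 * c.+1) + p@_(mono a b.+1 c d.+1) *+ (b.+1 * d.+1).
Proof.
rewrite /Dl mcoeffD !mcoeff_deriv U0E U1E U2E U3E !monoD !mono0 !mono1 !mono2 !mono3 ?addn0 ?add0n.
by rewrite !addn1 -!mulrnA [(c.+1 * _)%N]mulnC [(d.+1 * _)%N]mulnC.
Qed.

Definition qc (s : nat) (mu : int) (j j' : nat) : C :=
  if (j%:Z - j'%:Z == mu) then (-1) ^+ (s - j) * ('C(s, j))%:R * ('C(s, j'))%:R else 0.
Definition Qp s mu : P := poly4 s (qc s mu).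

Lemma Dl_Qp s mu : Dl (Qp s mu) = 0.
Proof.
apply/mpolyP => m; rewrite mcoeff0 (mono_eta m) coef_Dl /Qp !coef_poly4.
rewrite !mono0 !mono1 !mono2 !mono3.
set a := m i0; set b := m i1; set c := m i2; set d := m i3.
rewrite !addSn !addnS.
case: ifP => [/andP [/eqP ha /eqP hc]|_]; last by rewrite !mul0rn addr0.
rewrite /qc.
have -> : ((a.+1)%:Z - (c.+1)%:Z) = a%:Z - c%:Z by rewrite !intS; ring.
case: eqP => [_|_]; last by rewrite !mul0rn addr0.
have -> : (s - a = (s - a.+1).+1)%N by lia.
have Ea : (a.+1 * 'C(s, a.+1) = b.+1 * 'C(s, a))%N by rewrite mul_bin_left; congr (_ * _)%N; lia.
have Ec : (c.+1 * 'C(s, c.+1) = d.+1 * 'C(s, c))%N by rewrite mul_bin_left; congr (_ * _)%N; lia.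
have Ea' : ('C(s, a.+1))%:R * (a.+1)%:R = ('C(s, a))%:R * (b.+1)%:R :> C by rewrite -!natrM mulnC Ea mulnC.
have Ec' : ('C(s, c.+1))%:R * (c.+1)%:R = ('C(s, c))%:R * (d.+1)%:R :> C by rewrite -!natrM mulnC Ec mulnC.
rewrite exprS -(mulr_natr _ (a.+1 * c.+1)) -(mulr_natr _ (b.+1 * d.+1)) !natrM.
set x := (-1) ^+ (s - a.+1).
transitivity (x * (('C(s, a.+1))%:R * (a.+1)%:R) * (('C(s, c.+1))%:R * (c.+1)%:R)
   - x * (('C(s, a))%:R * (b.+1)%:R) * (('C(s, c))%:R * (d.+1)%:R) : C).
  ring.
by rewrite Ea' Ec' subrr.
Qed.

End Sec2.

Section Sec3.
Variable C : numClosedFieldType.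
Local Notation P := {mpoly C[4]}.

Lemma coef_X4_poly4 a b c d s (f : nat -> nat -> C) m :
  (X4 C a b c d * poly4 s f)@_m =
  if [&& (a <= m i0)%N, (c <= m i2)%N, (m i0 - a + (m i1 - b) == s)%N,
         (m i2 - c + (m i3 - d) == s)%N, (b <= m i1)%N & (d <= m i3)%N]
  then f (m i0 - a)%N (m i2 - c)%N else 0.
Proof.
rewrite /poly4 mulr_sumr raddf_sum /=.
transitivity (\sum_(k < s.+1) if (k == (m i0 - a)%N :> nat) then
   \sum_(k' < s.+1) (if (k' == (m i2 - c)%N :> nat) then
      (if [&& (a <= m i0)%N, (c <= m i2)%N, (b + (s - (m i0 - a)) == m i1)%N
            & (d + (s - (m i2 - c)) == m i3)%N]
       then f (m i0 - a)%N (m i2 - c)%N else 0) else 0) else 0).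
  apply: eq_bigr => k _; rewrite mulr_sumr raddf_sum /=.
  case: (@eqP _ (nat_of_ord k) (m i0 - a)%N) => [hk|hk].
    apply: eq_bigr => k' _; rewrite -scalerAr X4M mcoeffZ coefX4.
    case: (@eqP _ (nat_of_ord k') (m i2 - c)%N) => [hk'|hk'].
      rewrite hk hk'.
      case: ifP => H1.
        by rewrite (_ : [&& _, _, _ & _] = true) ?mulr1 //; move: H1; lia.
      by rewrite (_ : [&& _, _, _ & _] = false) ?mulr0 //; move: H1; lia.
    by rewrite (_ : [&& _, _, _ & _] = false) ?mulr0 //; move: hk'; lia.
  apply: big1 => k' _; rewrite -scalerAr X4M mcoeffZ coefX4.
  by rewrite (_ : [&& _, _, _ & _] = false) ?mulr0 //; move: hk; lia.
rewrite !sum_delta_c.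
have -> : [&& (a <= m i0)%N, (c <= m i2)%N, (m i0 - a + (m i1 - b) == s)%N,
         (m i2 - c + (m i3 - d) == s)%N, (b <= m i1)%N & (d <= m i3)%N] =
  [&& (m i0 - a < s.+1)%N, (m i2 - c < s.+1)%N & [&& (a <= m i0)%N, (c <= m i2)%N, (b + (s - (m i0 - a)) == m i1)%N
            & (d + (s - (m i2 - c)) == m i3)%N]].
  by apply/idP/idP => H; lia.
by case: (m i0 - a < s.+1)%N; case: (m i2 - c < s.+1)%N.
Qed.


Lemma zz_pow n : zz C ^+ n = \sum_(i < n.+1) ('C(n, i))%:R *: X4 C (n - i) i (n - i) i.
Proof.
rewrite /zz exprDn; apply: eq_bigr => i _.
by rewrite scaler_nat -X4E !exprMn; congr (_ *+ _); ring.
Qed.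

Lemma coef_zzQ n s (f : nat -> nat -> C) m :
  (zz C ^+ n * poly4 s f)@_m = \sum_(i < n.+1) ('C(n, i))%:R *
  (if [&& (n - i <= m i0)%N, (n - i <= m i2)%N, (m i0 - (n - i) + (m i1 - i) == s)%N,
         (m i2 - (n - i) + (m i3 - i) == s)%N, (i <= m i1)%N & (i <= m i3)%N]
   then f (m i0 - (n - i))%N (m i2 - (n - i))%N else 0).
Proof.
rewrite zz_pow mulr_suml raddf_sum; apply: eq_bigr => i _.
by rewrite -scalerAl /= mcoeffZ coef_X4_poly4.
Qed.

End Sec3.

Section Sec4.
Variable C : numClosedFieldType.

Lemma sqrtCMn (x y : C) : 0 <= x -> 0 <= y -> sqrtC (x * y) = sqrtC x * sqrtC y.
Proof. by move=> hx hy; rewrite sqrtCM // nnegrE. Qed.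

Lemma natr_neq0 (n : nat) : (0 < n)%N -> (n%:R : C) != 0.
Proof. by rewrite pnatr_eq0 -lt0n. Qed.

Lemma key (fN fk fa fk' fb ft fv fu fu' fj fj' fn fs BNa BNb Bnt Bsj Bsj' : nat) (F S : C) :
  0 <= F ->
  (BNa * fa * fk = fN)%N -> (BNb * fb * fk' = fN)%N -> (Bnt * ft * fv = fn)%N ->
  (Bsj * fj * fu = fs)%N -> (Bsj' * fj' * fu' = fs)%N ->
  (0 < fn)%N -> (0 < fs)%N ->
  sqrtC (BNa%:R) * sqrtC (BNb%:R) * (S * sqrtC (F * fa%:R * fk%:R * fk'%:R * fb%:R))
   / (ft%:R * fv%:R * fu%:R * fu'%:R * fj%:R * fj'%:R)
  = (fN%:R * S * sqrtC F / (fn%:R * fs%:R * fs%:R)) * (Bnt%:R * Bsj%:R * Bsj'%:R).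
Proof.
move=> hF E1 E2 E3 E4 E5 hn hs.
have E : sqrtC (BNa%:R) * sqrtC (BNb%:R) * sqrtC (F * fa%:R * fk%:R * fk'%:R * fb%:R)
   = fN%:R * sqrtC F.
  rewrite -!sqrtCMn ?mulr_ge0 ?ler0n //.
  have -> : (BNa%:R * BNb%:R * (F * fa%:R * fk%:R * fk'%:R * fb%:R) : C) = fN%:R ^+ 2 * F.
    by rewrite expr2 -{1}E1 -E2 !natrM; ring.
  by rewrite sqrtCMn ?exprn_ge0 ?ler0n // sqrCK ?ler0n.
have hn' := hn; have hs' := hs.
rewrite -E3 in hn'; rewrite -E4 in hs'.
have hs'' := hs; rewrite -E5 in hs''.
move: hn' hs' hs''; rewrite !muln_gt0 => /andP[/andP[h1 h2] h3] /andP[/andP[h4 h5] h6] /andP[/andP[h7 h8] h9].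
transitivity (S * (sqrtC (BNa%:R) * sqrtC (BNb%:R) * sqrtC (F * fa%:R * fk%:R * fk'%:R * fb%:R))
   / (ft%:R * fv%:R * fu%:R * fu'%:R * fj%:R * fj'%:R)); first by ring.
rewrite E -E3 {1}(esym E4) -E5 !natrM.
field.
by rewrite !natr_neq0.
Qed.
End Sec4.

Section Sec5.
Variable C : numClosedFieldType.

Definition S1 (N sigma : nat) : C :=
  sqrtC ((2 * sigma%:Z + 1)%:~R * (sigma`!)%:R * (sigma`!)%:R * ((N - sigma)`!)%:R
         / ((N + sigma + 1)`!)%:R).
Definition cst (N sigma : nat) (mu : int) : C :=
  (N`!)%:R * S1 N sigma * sqrtC (ifact C (sigma%:Z + mu) * ifact C (sigma%:Z - mu))
  / (((N - sigma)`!)%:R * (sigma`!)%:R * (sigma`!)%:R).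

Lemma ifactn (n : nat) : ifact C n%:Z = (n`!)%:R.
Proof. by []. Qed.

Ltac hv e v := rewrite (_ : Defs.half e = v); last by rewrite /Defs.half; lia.

Lemma coef_main (N sigma : nat) (mu : int) (k k' : nat) :
  (k <= N)%N -> (k' <= N)%N -> (sigma <= N)%N -> - (sigma%:Z) <= mu <= sigma%:Z ->
  ((-1) ^+ (N - k) * sqrtC ('C(N, N - k))%:R) * tensorOp C N sigma mu (inord k) (inord k')
      * ((-1) ^+ (N - k') * sqrtC ('C(N, N - k'))%:R)
  = cst N sigma mu * \sum_(i < (N - sigma).+1) ('C(N - sigma, i))%:R *
  (if [&& (N - sigma - i <= k)%N, (N - sigma - i <= k')%N,
          (k - (N - sigma - i) + (N - k - i) == sigma)%N,
          (k' - (N - sigma - i) + (N - k' - i) == sigma)%N, (i <= N - k)%N & (i <= N - k')%N]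
   then qc C sigma mu (k - (N - sigma - i))%N (k' - (N - sigma - i))%N else 0).
Proof.
move=> hk hk' hs hmu.
rewrite /tensorOp mxE !inordK ?ltnS // /CG.
rewrite (_ : [&& _, _, _, _, _, _, _, _, _, _, _, _ & _] = (k%:Z - k'%:Z == mu)); last first.
  by apply/idP/idP => H; lia.
hv (2 * sigma%:Z + N%:Z - N%:Z) (sigma%:Z).
hv (2 * sigma%:Z - N%:Z + N%:Z) (sigma%:Z).
hv (N%:Z + N%:Z - 2 * sigma%:Z) ((N - sigma)%N%:Z).
hv (N%:Z + N%:Z + 2 * sigma%:Z) ((N + sigma)%N%:Z).
hv (2 * sigma%:Z + 2 * mu) (sigma%:Z + mu).
hv (2 * sigma%:Z - 2 * mu) (sigma%:Z - mu).
hv (N%:Z - (2 * k%:Z - N%:Z)) ((N - k)%N%:Z).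
hv (N%:Z + (2 * k%:Z - N%:Z)) (k%:Z).
hv (N%:Z - - (2 * k'%:Z - N%:Z)) (k'%:Z).
hv (N%:Z - (2 * k'%:Z - N%:Z)) ((N - k')%N%:Z).
hv (2 * sigma%:Z - N%:Z + (2 * k%:Z - N%:Z)) (sigma%:Z + k%:Z - N%:Z).
hv (2 * sigma%:Z - N%:Z - - (2 * k'%:Z - N%:Z)) (sigma%:Z + k'%:Z - N%:Z).
rewrite absz_nat !ifactn.
case: eqP => [Emu|Nmu]; last first.
  rewrite mulr0 mulr0 mul0r big1 ?mulr0 // => i _.
  case: ifP => H; last by rewrite mulr0.
  by rewrite /qc ifF ?mulr0 //; apply/negbTE/eqP => E; apply: Nmu; move: E H; lia.
rewrite -/(S1 N sigma).
set Sm := \sum_(k0 < _) _.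
set F := ifact C (sigma%:Z + mu) * ifact C (sigma%:Z - mu).
set sk := (-1) ^+ (N - k) : C.
set sk' := (-1) ^+ (N - k') : C.
set Bsq := sqrtC (F * _ * _ * _ * _).
transitivity (\sum_(k0 < (N - sigma).+1) ((sk * sqrtC ('C(N, N - k))%:R * sk' * S1 N sigma * Bsq * sk'
    * sqrtC ('C(N, N - k'))%:R) * (if [&& 0 <= (N - sigma)%N%:Z - k0%:Z, 0 <= (N - k)%N%:Z - k0%:Z,
             0 <= (N - k')%N%:Z - k0%:Z, 0 <= sigma%:Z + k%:Z - N%:Z + k0%:Z
           & 0 <= sigma%:Z + k'%:Z - N%:Z + k0%:Z]
        then
         (-1) ^+ k0 /
         (ifact C k0 * ifact C ((N - sigma)%N%:Z - k0%:Z) *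
          ifact C ((N - k)%N%:Z - k0%:Z) * ifact C ((N - k')%N%:Z - k0%:Z) *
          ifact C (sigma%:Z + k%:Z - N%:Z + k0%:Z) * ifact C (sigma%:Z + k'%:Z - N%:Z + k0%:Z))
        else 0))).
  by rewrite -big_distrr /= -/Sm; ring.
rewrite big_distrr /=; apply: eq_bigr => t _.
case: ifP => H1.
  rewrite (_ : [&& _, _, _, _, _ & _] = true); last by move: H1; lia.
  rewrite (@subzn (N - sigma) t); last by lia.
  rewrite (@subzn (N - k) t); last by lia.
  rewrite (@subzn (N - k') t); last by lia.
  rewrite (_ : sigma%:Z + k%:Z - N%:Z + t%:Z = (k - (N - sigma - t))%N%:Z); last by lia.
  rewrite (_ : sigma%:Z + k'%:Z - N%:Z + t%:Z = (k' - (N - sigma - t))%N%:Z); last by lia.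
  rewrite !ifactn /qc ifT; last by apply/eqP; lia.
  set j := (k - (N - sigma - t))%N.
  set j' := (k' - (N - sigma - t))%N.
  have hsk : sk = (-1) ^+ (sigma - j) * (-1) ^+ t.
    by rewrite /sk -exprD; congr (_ ^+ _); rewrite /j; lia.
  have K := @key C (N`!) (k`!) ((N - k)`!) (k'`!) ((N - k')`!) (t`!) ((N - sigma - t)`!)
     ((N - k - t)`!) ((N - k' - t)`!) (j`!) (j'`!) ((N - sigma)`!) (sigma`!)
     ('C(N, N - k)) ('C(N, N - k')) ('C(N - sigma, t)) ('C(sigma, j)) ('C(sigma, j')) F (S1 N sigma).
  have hF : 0 <= F by rewrite /F mulr_ge0 ?ler0n.
  have E1 : ('C(N, N - k) * (N - k)`! * k`! = N`!)%N.
    by move: (bin_fact (leq_subr k N)); rewrite subKn // mulnA.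
  have E2 : ('C(N, N - k') * (N - k')`! * k'`! = N`!)%N.
    by move: (bin_fact (leq_subr k' N)); rewrite subKn // mulnA.
  have E3 : ('C(N - sigma, t) * t`! * (N - sigma - t)`! = (N - sigma)`!)%N.
    have ht : (t <= N - sigma)%N by move: H1; lia.
    by move: (bin_fact ht); rewrite mulnA.
  have E4 : ('C(sigma, j) * j`! * (N - k - t)`! = sigma`!)%N.
    rewrite (_ : (N - k - t = sigma - j)%N); last by rewrite /j; move: H1; lia.
    have ht : (j <= sigma)%N by rewrite /j; move: H1; lia.
    by move: (bin_fact ht); rewrite mulnA.
  have E5 : ('C(sigma, j') * j'`! * (N - k' - t)`! = sigma`!)%N.
    rewrite (_ : (N - k' - t = sigma - j')%N); last by rewrite /j'; move: H1; lia.
    have ht : (j' <= sigma)%N by rewrite /j'; move: H1; lia.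
    by move: (bin_fact ht); rewrite mulnA.
  have := K hF E1 E2 E3 E4 E5 (fact_gt0 _) (fact_gt0 _) => {}K.
  rewrite hsk.
  transitivity ((((-1) ^+ t * (-1) ^+ t) * (sk' * sk')) * ((-1) ^+ (sigma - j) *
     (sqrtC ('C(N, N - k))%:R * sqrtC ('C(N, N - k'))%:R * (S1 N sigma * Bsq)
      / (t`!%:R * (N - sigma - t)`!%:R * (N - k - t)`!%:R * (N - k' - t)`!%:R *
   j`!%:R * j'`!%:R)))); first by ring.
  rewrite -!expr2 /sk' !sqrr_sign !mul1r /Bsq K /cst; ring.
by rewrite mulr0 (_ : [&& _, _, _, _, _ & _] = false) ?mulr0 //; move: H1; lia.
Qed.
End Sec5.

Section Sec6.
Variable C : numClosedFieldType.

Lemma pT_closed (N sigma : nat) (mu : int) : (sigma <= N)%N -> - (sigma%:Z) <= mu <= sigma%:Z ->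
  pT C N sigma mu = cst C N sigma mu *: (zz C ^+ (N - sigma) * Qp C sigma mu).
Proof.
move=> hs hmu; apply/mpolyP => m.
rewrite mcoeffZ /pT majorana_poly4 coef_poly4 /Qp coef_zzQ.
case: ifP => H.
  have h1 : m i1 = (N - m i0)%N by move: H; lia.
  have h3 : m i3 = (N - m i2)%N by move: H; lia.
  rewrite coef_main //; try (move: H; lia).
  by rewrite h1 h3.
rewrite big1 ?mulr0 // => i _.
have hi := ltn_ord i.
by rewrite (_ : [&& _, _, _, _, _ & _] = false) ?mulr0 //; move: H hi; lia.
Qed.

End Sec6.

Section Sec7.
Variable C : numClosedFieldType.

Lemma int2s1 (s : nat) : ((2 * s%:Z + 1)%:~R : C) = (2 * s + 1)%N%:R.
Proof. by rewrite (_ : 2 * s%:Z + 1 = (2 * s + 1)%N%:Z) ?pmulrn //; lia. Qed.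

Lemma S1E N s : S1 C N s = sqrtC ((2 * s + 1)%N%:R * (s`!)%:R * (s`!)%:R * ((N - s)`!)%:R
         / ((N + s + 1)`!)%:R).
Proof. by rewrite /S1 int2s1. Qed.

Lemma fact_neq0 n : ((n`!)%:R : C) != 0.
Proof. exact/natr_neq0/fact_gt0. Qed.

Lemma S1_rel N s : (s <= N)%N ->
  S1 C N s * sqrtC (((N + s + 1)`! * (N - s)`!)%:R / ((2 * s + 1)`!)%:R)
  = ((N - s)`!)%:R * S1 C s s.
Proof.
move=> hs; rewrite !S1E -sqrtCMn ?divr_ge0 ?mulr_ge0 ?ler0n //.
rewrite subnn (_ : (s + s + 1 = 2 * s + 1)%N); last by lia.
rewrite -[X in X * sqrtC _](sqrCK (ler0n C ((N - s)`!))) -sqrtCMn ?exprn_ge0 ?divr_ge0 ?mulr_ge0 ?ler0n //.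
congr sqrtC.
rewrite fact0 !natrM.
field.
by rewrite !fact_neq0.
Qed.

Lemma S1_rel2 s n : S1 C (s + n).+1 s * ((s + n).+1 + s + 1)%N%:R
  = sqrtC ((((s + n).+1 + s + 1) * ((s + n).+1 - s))%N%:R) * S1 C (s + n) s.
Proof.
rewrite !S1E.
rewrite -[X in _ * X](sqrCK (ler0n C ((s + n).+1 + s + 1)%N)) -!sqrtCMn ?exprn_ge0 ?divr_ge0 ?mulr_ge0 ?ler0n //.
congr sqrtC.
rewrite (_ : ((s + n).+1 - s = n.+1)%N); last by lia.
rewrite (_ : ((s + n) - s = n)%N); last by lia.
rewrite (_ : ((s + n).+1 + s + 1 = (s + n + s + 1).+1)%N); last by lia.
rewrite (factS (s + n + s + 1)) (factS n) !natrM.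
field.
rewrite ?fact_neq0 ?natr_neq0 //=.
have := @natr_neq0 C (s + n + s + 1).+1 isT.
by rewrite -addn1 !natrD addrC.
Qed.

End Sec7.

Section Sec8.
Variable C : numClosedFieldType.

Lemma part2 (N sigma : nat) (mu : int) : (sigma <= N)%N -> - (sigma%:Z) <= mu <= sigma%:Z ->
  pT C N sigma mu = (lcoef C N sigma)^-1 *: (zz C ^+ (N - sigma) * pT C sigma sigma mu).
Proof.
move=> hs hmu.
rewrite (pT_closed C hs hmu) (pT_closed C (leqnn sigma) hmu) subnn expr0 mul1r -scalerAr scalerA.
congr (_ *: _).
rewrite /cst /lcoef.
set X := sqrtC (((N + sigma + 1)`! * (N - sigma)`!)%:R / ((2 * sigma + 1)`!)%:R).
have hX : X != 0.
  by rewrite /X sqrtC_eq0 mulf_neq0 ?invr_eq0 ?natrM ?mulf_neq0 ?fact_neq0.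
have E := S1_rel C hs; rewrite -/X in E.
have -> : S1 C N sigma = ((N - sigma)`!)%:R * S1 C sigma sigma / X.
  by rewrite -E; field.
rewrite subnn fact0.
field.
by rewrite hX !fact_neq0.
Qed.

Lemma Lop_Dl N (p : {mpoly C[4]}) : Lop N p = (N%:R ^+ 2)^-1 *: Dl p.
Proof. by []. Qed.

Lemma Dl_scale c (p : {mpoly C[4]}) : Dl (c *: p) = c *: Dl p.
Proof. by rewrite /Dl !mderivZ scalerDr. Qed.

Ltac pos := match goal with
 | |- is_true (0 < _ + _) => first [ apply: ltr_pwDl; [pos | nneg] | apply: ltr_wpDl; [nneg | pos] ]
 | |- is_true (0 < 1) => exact: ltr01
 | |- is_true (0 < _ * _) => apply: mulr_gt0; pos
 | |- is_true (0 < _%:R) => rewrite ltr0n; lia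
 end
with nneg := match goal with
 | |- is_true (0 <= _ + _) => apply: addr_ge0; nneg
 | |- is_true (0 <= 1) => exact: ler01
 | |- is_true (0 <= _ * _) => apply: mulr_ge0; nneg
 | |- is_true (0 <= _%:R) => exact: ler0n
 end.
Ltac nz := rewrite ?fact_neq0 /=; repeat (apply/andP; split); apply: lt0r_neq0; pos.

Lemma part1 (N sigma : nat) (mu : int) : (sigma <= N)%N -> - (sigma%:Z) <= mu <= sigma%:Z ->
     Lop N (pT C N sigma mu) =
       (if (sigma < N)%N
        then (sqrtC (((N + sigma + 1) * (N - sigma))%:R) / N%:R)
               *: pT C N.-1 sigma mu
        else 0).
Proof.
move=> hs hmu.
rewrite Lop_Dl (pT_closed C hs hmu) Dl_scale.
case: ltnP => h; last first.
  rewrite (_ : (N - sigma = 0)%N); last by lia.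
  by rewrite expr0 mul1r Dl_Qp !scaler0.
have [n EN] : exists n, N = (sigma + n).+1 by exists (N - sigma).-1; lia.
rewrite EN /=.
have hs' : (sigma <= sigma + n)%N by lia.
rewrite (pT_closed C hs' hmu).
rewrite (_ : ((sigma + n).+1 - sigma = n.+1)%N); last by lia.
rewrite (_ : ((sigma + n) - sigma = n)%N); last by lia.
rewrite (@Dl_pow C sigma) ?Dl_Qp /Qp ?Ez_poly4 ?Ew_poly4 // -/(Qp C sigma mu).
rewrite mulr_natl -scaler_nat !scalerA; congr (_ *: _).
rewrite /cst.
have E := S1_rel2 C sigma n.
rewrite (_ : ((sigma + n).+1 - sigma = n.+1)%N) in E; last by lia.
have hz : (((sigma + n).+1 + sigma + 1)%N%:R : C) != 0 by rewrite pnatr_eq0 addn1.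
have -> : S1 C (sigma + n).+1 sigma = sqrtC ((((sigma + n).+1 + sigma + 1) * n.+1)%N%:R) * S1 C (sigma + n) sigma
   / ((sigma + n).+1 + sigma + 1)%N%:R.
  rewrite -E; field; nz.
rewrite (_ : (n.+2 + 2 * sigma = (sigma + n).+1 + sigma + 1)%N); last by lia.
rewrite (_ : ((sigma + n).+1 - sigma = n.+1)%N); last by lia.
rewrite (_ : ((sigma + n) - sigma = n)%N); last by lia.
rewrite (factS (sigma + n)) (factS n) !natrM.
field.
nz.
Qed.

End Sec8.

Section Sec9.
Variable C : numClosedFieldType.

Ltac pos := match goal with
 | |- is_true (0 < _ + _) => first [ apply: ltr_pwDl; [pos | nneg] | apply: ltr_wpDl; [nneg | pos] ]
 | |- is_true (0 < 1) => exact: ltr01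
 | |- is_true (0 < _ * _) => apply: mulr_gt0; pos
 | |- is_true (0 < _%:R) => rewrite ltr0n; lia
 end
with nneg := match goal with
 | |- is_true (0 <= _ + _) => apply: addr_ge0; nneg
 | |- is_true (0 <= 1) => exact: ler01
 | |- is_true (0 <= _ * _) => apply: mulr_ge0; nneg
 | |- is_true (0 <= _%:R) => exact: ler0n
 end.
Ltac nz := rewrite ?fact_neq0 /=; repeat (apply/andP; split); apply: lt0r_neq0; pos.

Lemma sgn_sq (a : nat) (x : C) : ((-1) ^+ a * sqrtC x) * ((-1) ^+ a * sqrtC x) = x.
Proof. by rewrite mulrACA -!expr2 sqrr_sign sqrtCK mul1r. Qed.

Lemma sgn_sq2 (a : nat) (x X : C) : ((-1) ^+ a * sqrtC x) * X * ((-1) ^+ a * sqrtC x) = x * X.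
Proof. by rewrite mulrAC sgn_sq. Qed.

Lemma coef_maj N (A : 'M[C]_N.+1) (j j' : nat) : (j <= N)%N -> (j' <= N)%N ->
  (majorana A)@_(mono j (N - j) j' (N - j')) =
  ((-1) ^+ (N - j) * sqrtC ('C(N, N - j))%:R) * A (inord j) (inord j')
      * ((-1) ^+ (N - j') * sqrtC ('C(N, N - j'))%:R).
Proof.
move=> hj hj'; rewrite majorana_poly4 coef_poly4 !mono0 !mono1 !mono2 !mono3.
by rewrite !subnKC ?eqxx.
Qed.

Lemma trace_part N' (A : 'M[C]_N'.+2) (A' : 'M[C]_N'.+1) :
  majorana A' = Lop N'.+1 (majorana A) -> \tr A' = \tr A.
Proof.
move=> HA.
set g := fun k : nat => A (inord k) (inord k).
have key : forall j : 'I_N'.+1, A' j j =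
   ((j.+1)%:R * g j.+1 + (N'.+1 - j)%:R * g j) / N'.+1%:R.
  move=> j; have hj := ltn_ord j.
  have := congr1 (mcoeff (mono j (N' - j) j (N' - j))) HA.
  rewrite coef_maj; try by lia.
  rewrite ?inord_val.
  rewrite Lop_Dl mcoeffZ coef_Dl.
  rewrite (_ : (N' - j).+1 = N'.+1 - j)%N; last by lia.
  rewrite (_ : (N' - j) = N'.+1 - j.+1)%N; last by lia.
  rewrite !coef_maj; try by lia.
  move=> E.
  rewrite !sgn_sq2 in E.
  rewrite -(mulr_natr _ (j.+1 * j.+1)) -(mulr_natr _ ((N'.+1 - j) * (N'.+1 - j))) !natrM in E.
  set c := 'C(N', N'.+1 - j.+1).
  have hc : c = 'C(N', j) by rewrite /c (_ : (N'.+1 - j.+1 = N' - j)%N) ?bin_sub //; lia.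
  have cnz : (c%:R : C) != 0 by rewrite pnatr_eq0 -lt0n hc bin_gt0; lia.
  have h1 : ('C(N'.+1, N'.+1 - j.+1)%:R * j.+1%:R = N'.+1%:R * c%:R :> C).
    rewrite -!natrM; congr (_%:R).
    by rewrite bin_sub // mulnC -mul_bin_diag hc.
  have h2 : ('C(N'.+1, N'.+1 - j)%:R * (N'.+1 - j)%:R = N'.+1%:R * c%:R :> C).
    rewrite -!natrM; congr (_%:R).
    by rewrite bin_sub 1?ltnW // mulnC -mul_bin_down hc.
  apply: (mulfI cnz); rewrite E.
  transitivity (N'.+1%:R ^- 2 * (('C(N'.+1, N'.+1 - j.+1)%:R * j.+1%:R) * j.+1%:R * A (inord j.+1) (inord j.+1)
     + ('C(N'.+1, N'.+1 - j)%:R * (N'.+1 - j)%:R) * (N'.+1 - j)%:R * A (inord j) (inord j))); first by ring.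
  rewrite h1 h2 /g; field; nz.
rewrite /mxtrace.
under eq_bigr do rewrite key.
rewrite -mulr_suml.
have -> : \sum_(i < N'.+2) A i i = \sum_(i < N'.+2) g i by apply eq_bigr => i _; rewrite /g inord_val.
have E1 : (\sum_(i < N'.+2) g i) * N'.+1%:R = \sum_(i < N'.+2) (i%:R * g i + (N'.+1 - i)%:R * g i).
  rewrite mulr_suml; apply eq_bigr => i _; have hi := ltn_ord i.
  rewrite -mulrDl -natrD subnKC; [by rewrite mulrC | lia].
have E2 : \sum_(i < N'.+2) (i%:R * g i + (N'.+1 - i)%:R * g i) =
    \sum_(j < N'.+1) (j.+1%:R * g j.+1 + (N'.+1 - j)%:R * g j).
  rewrite big_split (big_ord_recl N'.+1) (big_ord_recr N'.+1).
  under eq_bigr do rewrite lift0.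
  rewrite /= mul0r add0r subnn mul0r addr0 -big_split /=.
  by apply eq_bigr.
rewrite -E2 -E1 mulfK //; nz.
Qed.
End Sec9.


Unset Implicit Arguments.

(* N = 2s >= 1 (s in {1/2, 1, 3/2, ...}). *)
Theorem theorem1 (C : numClosedFieldType) (N : nat) (hN : (0 < N)%N) :
  (* (1) *)
  (forall (sigma : nat) (mu : int), (sigma <= N)%N ->
     - (sigma%:Z) <= mu <= sigma%:Z ->
     Lop N (pT C N sigma mu) =
       (if (sigma < N)%N
        then (sqrtC (((N + sigma + 1) * (N - sigma))%:R) / N%:R)
               *: pT C N.-1 sigma mu
        else 0))
  /\ (sqrtC (N.+1)%:R)^-1 *: Lop N (pT C N 0 0)
       = (sqrtC (N%:R : C))^-1 *: pT C N.-1 0 0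
  /\ ((1 < N)%N ->
      forall (A : 'M[C]_N.+1) (A' : 'M[C]_((N.-1).+1)),
        majorana A' = Lop N (majorana A) -> \tr A' = \tr A)
  (* (2) *)
  /\ (forall (sigma : nat) (mu : int), (sigma <= N)%N ->
        - (sigma%:Z) <= mu <= sigma%:Z ->
        pT C N sigma mu
          = (lcoef C N sigma)^-1 *: (zz C ^+ (N - sigma) * pT C sigma sigma mu)).
Proof.
split; [|split; [|split]].
- by move=> sigma mu hs hmu; apply: part1.
- rewrite (@part1 C N 0 0 (leq0n N)) // hN scalerA; congr (_ *: _).
  rewrite addn0 subn0 addn1 natrM sqrtCMn ?ler0n //.
  rewrite -[in X in _ / X](sqrtCK (N%:R : C)).
  have ha : sqrtC ((N.+1)%:R : C) != 0 by rewrite sqrtC_eq0 pnatr_eq0.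
  have hb : sqrtC ((N%:R : C)) != 0 by rewrite sqrtC_eq0 pnatr_eq0 -lt0n.
  by field; rewrite ha hb.
- case: N hN => [//|N'] _ _ A A' HA.
  exact: (trace_part HA).
- by move=> sigma mu hs hmu; apply: part2.
Qed.
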